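(* Let $x_1\ge\cdots\ge x_n$ and $y_1\ge\cdots\ge y_n$ be reals such that $\{x_i\}$ majorizes $\{y_i\}$. Suppose that in the negative-fill variable-processor cup game there is a filler move on the state $\{y_i\}$ such that after greedy emptying the state becomes $\{y_i'\}$. Then there is a filler move on the state $\{x_i\}$ (possibly with a different number of processors $p$) such that after greedy emptying the state becomes some $\{x_i'\}$ which majorizes $\{y_i'\}$.
   Context: For sequences $x_1\ge\cdots\ge x_n$ and $y_1\ge\cdots\ge y_n$ with $\sum_i x_i=\sum_i y_i$, $\{x_i\}$ majorizes $\{y_i\}$ if $\sum_{i=1}^m x_i\ge\sum_{i=1}^m y_i$ for every $m\le n$; for unsorted sequences this is applied after sorting. Negative-fill variable-processor cup game: a filler move chooses an integer $1\le p\le n$ and reals $a_i\in[0,1]$ with $\sum a_i=p$ and adds $a_i$ to cup $i$; greedy emptying then subtracts exactly $1$ from each of the $p$ cups with largest fill (fills may become negative). *)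

(* Defs.v *)
From HB Require Import structures.
From mathcomp Require Import all_boot all_order all_algebra.
From mathcomp Require Import reals.
Set Implicit Arguments. Unset Strict Implicit. Unset Printing Implicit Defensive.
Import Order.TTheory GRing.Theory Num.Theory.
Local Open Scope ring_scope.

Section CupGame.
Variables (R : realType) (n : nat).

Definition nonincreasing (x : 'I_n -> R) : Prop :=
  forall i j : 'I_n, (i <= j)%N -> x j <= x i.

Definition sort_desc (x : 'I_n -> R) : seq R :=
  sort (fun a b : R => b <= a) [seq x i | i <- enum 'I_n].

Definition majorizes (x y : 'I_n -> R) : Prop :=
  \sum_(i < n) x i = \sum_(i < n) y i /\
  forall m : nat, (m <= n)%N ->
    \sum_(v <- take m (sort_desc y)) v <= \sum_(v <- take m (sort_desc x)) v.

Definition filler_move (p : nat) (a : 'I_n -> R) : Prop :=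
  [/\ (1 <= p)%N, (p <= n)%N,
      forall i, 0 <= a i /\ a i <= 1
    & \sum_(i < n) a i = p%:R].

Definition greedy_empty (p : nat) (z z' : 'I_n -> R) : Prop :=
  exists S : {set 'I_n},
    [/\ #|S| = p,
        forall i j, i \in S -> j \notin S -> z j <= z i
      & forall i, z' i = z i - (i \in S)%:R].

Definition game_step (z z' : 'I_n -> R) : Prop :=
  exists (p : nat) (a : 'I_n -> R),
    filler_move p a /\ greedy_empty p (fun i => z i + a i) z'.

End CupGame.

(* Main.v *)
Require Import Defs.
From HB Require Import structures.
From mathcomp Require Import all_boot all_order all_algebra.
From mathcomp Require Import reals lra.
Import Order.TTheory GRing.Theory Num.Theory.
Local Open Scope ring_scope.
Set Implicit Arguments. Unset Strict Implicit. Unset Printing Implicit Defensive.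

Section S.
Variable R : realType.
Variable n : nat.
Definition pp (x : R) : R := if 0 <= x then x else 0.
Lemma ppP x : (0 <= x /\ pp x = x) \/ (x < 0 /\ pp x = 0).
Proof. rewrite /pp; case: ifP => h; [left | right]; split => //.
by rewrite ltNge h. Qed.

Lemma pp_ge0 x : 0 <= pp x.
Proof. by case: (ppP x) => [[? ->]|[? ->]]. Qed.

Lemma pp_ge x : x <= pp x.
Proof. case: (ppP x) => [[? ->]|[? ->]] //; lra. Qed.

Lemma seq_upper (s : seq R) (m : nat) (t : R) : (m <= size s)%N ->
  \sum_(v <- take m s) v <= m%:R * t + \sum_(v <- s) pp (v - t).
Proof.
elim: s m => [|v s IH] [|m] //=.
- move=> _; rewrite !big_nil; lra.
- move=> _; rewrite big_nil mul0r add0r; apply: sumr_ge0 => i _; exact: pp_ge0.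
- rewrite ltnS => hm; rewrite !big_cons.
  have := IH m hm; have := pp_ge (v - t); rewrite -natr1; lra.
Qed.

Lemma seq_lower (s : seq R) (m : nat) (t : R) :
  (forall u, u \in take m s -> t <= u) -> (forall u, u \in drop m s -> u <= t) ->
  \sum_(v <- s) pp (v - t) <= \sum_(v <- take m s) v - (minn m (size s))%:R * t.
Proof.
elim: s m => [|v s IH] [|m] /=.
- by move=> _ _; rewrite !big_nil min0n mul0r subr0.
- by move=> _ _; rewrite !big_nil minn0 mul0r subr0.
- move=> _ hd; rewrite big_nil min0n mul0r subr0 big1_seq // => u /andP[_ hu].
  case: (ppP (u - t)) => [[h ->]|[? ->]] //.
  have := hd u hu; lra.
- move=> ht hd; rewrite !big_cons.
  have hv : t <= v by apply: ht; rewrite inE eqxx.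
  have := IH m (fun u hu => ht u (@mem_behead _ (v :: take m s) u hu)) hd.
  case: (ppP (v - t)) => [[? ->]|[? ->]]; rewrite minnSS -natr1; lra.
Qed.

Definition phi (v : 'I_n -> R) (t : R) := \sum_i pp (v i - t).

Definition geR := (fun a b : R => b <= a).
Lemma geR_tr : transitive geR. Proof. by move=> b a c h1 h2; exact: le_trans h2 h1. Qed.
Lemma geR_tot : total geR. Proof. by move=> a b; rewrite /geR le_total. Qed.
Lemma geR_refl : reflexive geR. Proof. by move=> a; rewrite /geR. Qed.

Lemma size_sd (v : 'I_n -> R) : size (sort_desc v) = n.
Proof. by rewrite /sort_desc size_sort size_map size_enum_ord. Qed.

Lemma sum_sort_pp (v : 'I_n -> R) t : \sum_(w <- sort_desc v) pp (w - t) = phi v t.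
Proof.
rewrite /sort_desc (perm_big [seq v i | i <- enum 'I_n]); last by rewrite perm_sort.
by rewrite big_map big_enum.
Qed.

Lemma B2 (u v : 'I_n -> R) : \sum_i u i = \sum_i v i ->
  (forall t, phi v t <= phi u t) -> majorizes u v.
Proof.
move=> hs hphi; split; first by [].
move=> m hm; case: m hm => [|m] hm; first by rewrite !take0 !big_nil.
set s := sort_desc u.
set t := nth 0 s m.
have szs : size s = n by rewrite size_sd.
apply: le_trans (seq_upper t _) _; first by rewrite size_sd.
rewrite sum_sort_pp.
have srt : sorted geR s by apply: sort_sorted; exact: geR_tot.
have hl := @seq_lower s m.+1 t.
rewrite szs (minn_idPl hm) sum_sort_pp in hl.
suff : phi u t <= \sum_(v <- take m.+1 s) v - m.+1%:R * t.
  by have := hphi t; lra.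
apply: hl.
- move=> w /(nthP 0) [i]; rewrite size_takel ?szs // => hi <-.
  rewrite nth_take //.
  apply: (sorted_leq_nth geR_tr geR_refl 0 srt); rewrite ?inE ?szs //.
  exact: leq_ltn_trans hm.
- move=> w /(nthP 0) [i]; rewrite size_drop szs => hi <-.
  rewrite nth_drop.
  apply: (sorted_leq_nth geR_tr geR_refl 0 srt); rewrite ?inE ?szs //.
  + by rewrite -ltn_subRL.
  + by rewrite (leq_trans (leqnSn m)) // leq_addr.
Qed.

Lemma sd_noninc (u : 'I_n -> R) : nonincreasing u ->
  sort_desc u = [seq u i | i <- enum 'I_n].
Proof.
move=> hu; apply: (sorted_sort geR_tr).
have h1 : sorted (relpre (@nat_of_ord n) ltn) (enum 'I_n).
  by rewrite -sorted_map val_enum_ord iota_ltn_sorted.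
have : sorted (relpre u geR) (enum 'I_n).
  by apply: sub_sorted h1 => i j /= hij; apply: hu; exact: ltnW.
by rewrite sorted_map.
Qed.

Lemma sum_take_map (f : 'I_n -> R) m : (m <= n)%N ->
  \sum_(w <- take m [seq f i | i <- enum 'I_n]) w = \sum_(i < n | (i < m)%N) f i.
Proof.
move=> hm; rewrite -map_take big_map [RHS]big_mkcond /= -big_enum -big_mkcond /=.
rewrite -[in RHS](cat_take_drop m (enum 'I_n)) big_cat /=.
rewrite [X in _ = _ + X]big1_seq ?addr0; last first.
  move=> i /andP[him hi].
  have : val i \in map val (drop m (enum 'I_n)) by apply: map_f.
  by rewrite map_drop val_enum_ord drop_iota mem_iota add0n leqNgt him.
rewrite [RHS]big_seq_cond [LHS]big_seq; apply: eq_bigl => i.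
case hi: (i \in take m (enum 'I_n)) => //=.
have : val i \in map val (take m (enum 'I_n)) by apply: map_f.
by rewrite map_take val_enum_ord take_iota mem_iota add0n (minn_idPl hm) => /andP[_ ->].
Qed.

Lemma B1 (u v : 'I_n -> R) : nonincreasing u -> nonincreasing v -> majorizes u v ->
  forall t, phi v t <= phi u t.
Proof.
move=> hu hv [_ hmaj] t.
have hm : forall m, (m <= n)%N -> \sum_(i < n | (i < m)%N) v i <= \sum_(i < n | (i < m)%N) u i.
  move=> m hm; have := hmaj m hm.
  by rewrite (sd_noninc hu) (sd_noninc hv) !sum_take_map.
have [m [hmn hlo hhi]] : exists m, [/\ (m <= n)%N,
   forall i : 'I_n, (i < m)%N -> t <= v i & forall i : 'I_n, (m <= i)%N -> v i <= t].
  case: (pickP (fun i => v i < t)) => [i0 hi0 | hnone].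
    case: (@arg_minnP _ i0 (fun i => v i < t) (fun i : 'I_n => val i) hi0) => i hi hmin.
    exists (val i); split.
    - exact: ltnW (ltn_ord i).
    - move=> j hj; rewrite leNgt; apply/negP => hjt.
      by have := hmin j hjt; rewrite leqNgt hj.
    - by move=> j hj; apply: le_trans (hv _ _ hj) (ltW hi).
  exists n; split => // i hi; first by have := hnone i => /= /negbT; rewrite -leNgt.
  by have := ltn_ord i; rewrite ltnNge hi.
have e1 : phi v t = \sum_(i < n | (i < m)%N) (v i - t).
  rewrite /phi [RHS]big_mkcond /=; apply: eq_bigr => i _.
  case: ifP => him.
    by case: (ppP (v i - t)) => [[? ->]|[? ->]] //; have := hlo i him; lra.
  have h : v i <= t by apply: hhi; rewrite leqNgt him.
  by case: (ppP (v i - t)) => [[? ->]|[? ->]] //; lra.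
rewrite e1; apply: (@le_trans _ _ (\sum_(i < n | (i < m)%N) (u i - t))).
  by rewrite !sumrB lerD2r hm.
apply: (@le_trans _ _ (\sum_(i < n | (i < m)%N) pp (u i - t))).
  by apply: ler_sum => i _; exact: pp_ge.
rewrite /phi [X in _ <= X](bigID (fun i : 'I_n => (i < m)%N)) /= lerDl.
by apply: sumr_ge0 => i _; exact: pp_ge0.
Qed.

Lemma pp_mono a b : a <= b -> pp a <= pp b.
Proof. by case: (ppP a) => [[? ->]|[? ->]]; case: (ppP b) => [[? ->]|[? ->]] //; lra. Qed.
Lemma pp0 a : a <= 0 -> pp a = 0.
Proof. by case: (ppP a) => [[? ->]|[? ->]] //; lra. Qed.
Lemma pp_id a : 0 <= a -> pp a = a.
Proof. by case: (ppP a) => [[? ->]|[? ->]] //; lra. Qed.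
Lemma pp_split v t : pp (v - t) = v - t + pp (t - v).
Proof. by case: (ppP (v - t)) => [[? ->]|[? ->]]; case: (ppP (t - v)) => [[? ->]|[? ->]]; lra. Qed.

Definition clip (al v : R) := if v < al then al else if al + 1 < v then al + 1 else v.
Lemma clip_cases al v : [\/ v < al /\ clip al v = al, al + 1 < v /\ clip al v = al + 1 |
   (al <= v <= al + 1) /\ clip al v = v].
Proof.
rewrite /clip; case: ifP => h1; first by apply: Or31.
case: ifP => h2; first by apply: Or32.
by apply: Or33; split => //; rewrite leNgt h1 /= leNgt h2.
Qed.

Lemma pp_clip al v t : al <= t <= al + 1 ->
  pp (v - t) = pp (v - (al + 1)) + pp (clip al v - t).
Proof.
move=> /andP[h1 h2].
case: (clip_cases al v) => [[hv ->]|[hv ->]|[/andP[hv1 hv2] ->]];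
 case: (ppP (v - t)) => [[? ->]|[? ->]]; case: (ppP (v - (al+1))) => [[? ->]|[? ->]];
 try case: (ppP (al - t)) => [[? ->]|[? ->]];
 try case: (ppP (al + 1 - t)) => [[? ->]|[? ->]];
 try case: (ppP (v - t)) => [[? ->]|[? ->]]; lra.
Qed.

Lemma clip_id al v :
  clip al v - al + pp (v - (al + 1)) = v - al + pp (al - v).
Proof.
case: (clip_cases al v) => [[hv ->]|[hv ->]|[/andP[hv1 hv2] ->]];
 case: (ppP (v - (al+1))) => [[? ->]|[? ->]]; case: (ppP (al - v)) => [[? ->]|[? ->]]; lra.
Qed.

Lemma cnt j : (j <= n)%N -> \sum_(k < n | (k < j)%N) (1:R) = j%:R.
Proof.
by move=> hj; rewrite -(big_ord_widen _ (fun _ => (1:R)) hj) sumr_const card_ord.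
Qed.

Definition psi (v : 'I_n -> R) (t : R) := \sum_i pp (t - v i).

Lemma phi_psi w t : phi w t = \sum_i w i - n%:R * t + psi w t.
Proof.
rewrite /phi /psi; under eq_bigr do rewrite pp_split.
by rewrite big_split /= sumrB sumr_const card_ord mulr_natl.
Qed.

Lemma core (al : R) (x y x' y' e : 'I_n -> R) (sg : R) :
  (forall k, (al <= y' k <= y k) \/ (y k <= y' k <= al + 1)) ->
  (forall k, x' k = x k \/ ((al <= x k <= al + 1) /\ (al <= x' k <= al + 1))) ->
  \sum_i x' i = \sum_i x i -> \sum_i y' i = \sum_i y i -> \sum_i x i = \sum_i y i ->
  (forall t, phi y t <= phi x t) ->
  (forall k, clip al (x' k) = e k) ->
  sg = \sum_k (clip al (x k) - al) ->
  (forall j, (j <= n)%N -> (j%:R <= sg -> j%:R <= \sum_(k < n | (k < j)%N) (e k - al)) /\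
                          (sg <= j%:R -> sg <= \sum_(k < n | (k < j)%N) (e k - al))) ->
  forall t, phi y' t <= phi x' t.
Proof.
move=> hY hP sx sy sxy hB hcl hsg he t.
have c1 : forall t, al + 1 <= t -> phi y' t <= phi x t /\ phi x t = phi x' t.
  move=> t0 ht; split.
  - apply: le_trans (hB t0); apply: ler_sum => k _.
    case: (hY k) => /andP[h1 h2]; first by apply: pp_mono; lra.
    by rewrite pp0; [exact: pp_ge0 | lra].
  - apply: eq_bigr => k _; case: (hP k) => [-> //|[/andP[h1 h2] /andP[h3 h4]]].
    by rewrite !pp0 //; lra.
have c2 : forall t, t <= al -> psi y' t <= psi x t /\ psi x t = psi x' t.
  move=> t0 ht; split.
  - have : psi y t0 <= psi x t0.
      by have := hB t0; rewrite !phi_psi sxy; lra.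
    apply: le_trans; apply: ler_sum => k _.
    case: (hY k) => /andP[h1 h2]; last by apply: pp_mono; lra.
    by rewrite pp0; [exact: pp_ge0 | lra].
  - apply: eq_bigr => k _; case: (hP k) => [-> //|[/andP[h1 h2] /andP[h3 h4]]].
    by rewrite !pp0 //; lra.
case: (lerP (al + 1) t) => ht1; first by case: (c1 t ht1) => h1 <-.
case: (lerP t al) => ht2.
  by case: (c2 t ht2) => h1 h2; rewrite !phi_psi sx sy sxy -h2; lra.
have hb : al <= t <= al + 1 by apply/andP; split; lra.
have eq1 : forall w, phi w t = phi w (al + 1) + \sum_k pp (clip al (w k) - t).
  by move=> w; rewrite /phi -big_split; apply: eq_bigr => k _; exact: pp_clip.
rewrite !eq1.
have [hA' hAx] := c1 (al + 1) (lexx _).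
have [hD' hDx] := c2 al (lexx _).
pose J := [pred k : 'I_n | t < clip al (y' k)].
pose j := #|J|.
have hjn : (j <= n)%N by rewrite /j -[X in (_ <= X)%N](card_ord n) max_card.
have ey : \sum_k pp (clip al (y' k) - t) =
    \sum_(k in J) (clip al (y' k) - al) - j%:R * (t - al).
  rewrite [LHS](bigID (fun k => k \in J)) /= [X in _ + X]big1 ?addr0; last first.
    by move=> k; rewrite inE -leNgt => hk; rewrite pp0 //; lra.
  have -> : j%:R * (t - al) = \sum_(k in J) (t - al) by rewrite sumr_const mulr_natl.
  rewrite -sumrB; apply: eq_bigr => k; rewrite inE => hk; rewrite pp_id; lra.
have hS1 : \sum_(k in J) (clip al (y' k) - al) <= j%:R.
  rewrite /j -sum1_card natr_sum; apply: ler_sum => k _.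
  by case: (clip_cases al (y' k)) => [[? ->]|[? ->]|[? ->]]; lra.
have hS2 : \sum_(k in J) (clip al (y' k) - al) <= \sum_k (clip al (y' k) - al).
  rewrite [X in _ <= X](bigID (fun k => k \in J)) /= lerDl; apply: sumr_ge0 => k _.
  by case: (clip_cases al (y' k)) => [[? ->]|[? ->]|[/andP[? ?] ->]]; lra.
have idy : \sum_k (clip al (y' k) - al) + phi y' (al + 1) = \sum_k y' k - n%:R * al + psi y' al.
  rewrite /phi /psi -big_split /=; under eq_bigr do rewrite clip_id.
  by rewrite big_split /= sumrB sumr_const card_ord mulr_natl.
have idx : sg + phi x (al + 1) = \sum_k x k - n%:R * al + psi x al.
  rewrite hsg /phi /psi -big_split /=; under eq_bigr do rewrite clip_id.
  by rewrite big_split /= sumrB sumr_const card_ord mulr_natl.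
have ex : \sum_(k < n | (k < j)%N) (e k - al) - j%:R * (t - al) <= \sum_k pp (clip al (x' k) - t).
  have -> : j%:R * (t - al) = \sum_(k < n | (k < j)%N) (t - al) by rewrite -cnt // mulr_suml; apply: eq_bigr => k _; rewrite mul1r.
  rewrite -sumrB; apply: (@le_trans _ _ (\sum_(k < n | (k < j)%N) pp (clip al (x' k) - t))).
    by apply: ler_sum => k _; rewrite hcl; have := pp_ge (e k - t); lra.
  rewrite [X in _ <= X](bigID (fun k : 'I_n => (k < j)%N)) /= lerDl.
  by apply: sumr_ge0 => k _; exact: pp_ge0.
have [he1 he2] := he j hjn.
rewrite ey -hAx.
case: (lerP j%:R sg) => hjs.
  have := he1 hjs; lra.
have := he2 (ltW hjs); lra.
Qed.

Definition clamp01 (u : R) := if u < 0 then 0 else if 1 < u then 1 else u.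
Lemma clamp_cases u : [\/ u < 0 /\ clamp01 u = 0, 1 < u /\ clamp01 u = 1 |
   (0 <= u <= 1) /\ clamp01 u = u].
Proof.
rewrite /clamp01; case: ifP => h1; first by apply: Or31.
case: ifP => h2; first by apply: Or32.
by apply: Or33; split => //; rewrite leNgt h1 /= leNgt h2.
Qed.

Lemma clamp_sum (sg : R) : 0 <= sg -> forall j : nat,
  (j%:R <= sg -> \sum_(k < j) clamp01 (sg - k%:R) = j%:R) /\
  (sg <= j%:R -> \sum_(k < j) clamp01 (sg - k%:R) = sg).
Proof.
move=> hs; elim=> [|j [IH1 IH2]].
  by rewrite big_ord0; split => // h; apply/eqP; rewrite eq_le h hs.
rewrite big_ord_recr /= -natr1; split => h.
  rewrite IH1; last lra.
  by case: (clamp_cases (sg - j%:R)) => [[? ->]|[? ->]|[? ->]]; lra.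
case: (lerP j%:R sg) => hj.
  rewrite IH1 //.
  by case: (clamp_cases (sg - j%:R)) => [[? ->]|[? ->]|[/andP[? ?] ->]]; lra.
rewrite IH2; last lra.
by case: (clamp_cases (sg - j%:R)) => [[? ->]|[? ->]|[/andP[? ?] ->]]; lra.
Qed.

Lemma reach (x x' : 'I_n -> R) (al : R) : (0 < n)%N ->
  (forall k, x' k = x k \/ ((al <= x k <= al + 1) /\ (al <= x' k <= al + 1))) ->
  \sum_i x' i = \sum_i x i -> game_step x x'.
Proof.
move=> hn hP hs.
pose S' := [set k | (x' k <= x k) && (al <= x' k)].
case: (boolP (S' == set0)) => hS.
  have hk : forall k, x' k - x k = 0.
    have h0 : forall k, 0 <= x' k - x k.
      move=> k; case: (hP k) => [->|[/andP[h1 h2] /andP[h3 h4]]]; first by rewrite subrr.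
      have : k \notin S' by rewrite (eqP hS) inE.
      rewrite inE negb_and h3 orbF -ltNge => h; lra.
    move=> k; apply: (@psumr_eq0P _ _ predT (fun i => x' i - x i) (fun i _ => h0 i)) => //.
    by rewrite sumrB hs subrr.
  exists n, (fun _ => 1); split.
    split => //; try (by move=> i; split; lra); by rewrite sumr_const card_ord.
  exists setT; split.
  - by rewrite cardsT card_ord.
  - by move=> i j _; rewrite inE.
  - by move=> i; rewrite inE /=; have := hk i; lra.
exists #|S'|, (fun k => x' k - x k + (k \in S')%:R); split.
  split.
  - by rewrite card_gt0.
  - by rewrite -[X in (_ <= X)%N](card_ord n) max_card.
  - move=> k; case hk: (k \in S'); move: hk; rewrite inE => hk /=.
      case/andP: hk => h1 h2; case: (hP k) => [e|[/andP[h3 h4] /andP[h5 h6]]]; split; lra.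
    case: (hP k) => [e|[/andP[h3 h4] /andP[h5 h6]]]; first by split; lra.
    move/negbT: hk; rewrite h5 andbT -ltNge => hk; split; lra.
  - rewrite big_split /= sumrB hs subrr add0r.
    rewrite -sum1_card natr_sum [RHS]big_mkcond /=.
    by apply: eq_bigr => k _; case: (k \in S').
exists S'; split => //.
- move=> i j hi hj /=; move: hi hj; rewrite !inE => /andP[h1 h2] hj /=.
  rewrite (negbTE hj) /= h1 h2 /= ?mulr1n.
  case: (hP j) => [e|[/andP[h3 h4] /andP[h5 h6]]]; last lra.
  move: hj; rewrite e lexx /= -ltNge => hj; lra.
- by move=> i /=; lra.
Qed.

Definition sgm (al : R) (x : 'I_n -> R) := \sum_k (clip al (x k) - al).
Definition ee (al : R) (x : 'I_n -> R) (k : 'I_n) := al + clamp01 (sgm al x - (k:nat)%:R).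
Definition xp (al : R) (x : 'I_n -> R) (k : 'I_n) := x k - clip al (x k) + ee al x k.

Lemma clip_b al v : al <= clip al v <= al + 1.
Proof. by case: (clip_cases al v) => [[? ->]|[? ->]|[/andP[? ?] ->]]; apply/andP; split; lra. Qed.

Lemma sgm_b al x : 0 <= sgm al x <= n%:R.
Proof.
apply/andP; split.
  by apply: sumr_ge0 => k _; have /andP[? ?] := clip_b al (x k); lra.
rewrite -[n in n%:R](card_ord n) -sumr_const; apply: ler_sum => k _.
by have /andP[? ?] := clip_b al (x k); lra.
Qed.

Lemma ee_hi al x k : nonincreasing x -> al + 1 < x k -> clamp01 (sgm al x - (k:nat)%:R) = 1.
Proof.
move=> hx hk.
have : (k.+1)%:R <= sgm al x.
  rewrite /sgm (bigID (fun i : 'I_n => (i < k.+1)%N)) /=.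
  have -> : \sum_(i < n | (i < k.+1)%N) (clip al (x i) - al) = (k.+1)%:R.
    rewrite -cnt ?ltn_ord //; apply: eq_bigr => i hi.
    have hxi : x k <= x i by apply: hx.
    by case: (clip_cases al (x i)) => [[? ->]|[? ->]|[/andP[? ?] ->]]; lra.
  rewrite lerDl; apply: sumr_ge0 => i _; have /andP[? ?] := clip_b al (x i); lra.
rewrite -natr1 => h.
by case: (clamp_cases (sgm al x - k%:R)) => [[? ->]|[? ->]|[/andP[? ?] ->]]; lra.
Qed.

Lemma ee_lo al x k : nonincreasing x -> x k < al -> clamp01 (sgm al x - (k:nat)%:R) = 0.
Proof.
move=> hx hk.
have : sgm al x <= k%:R.
  rewrite /sgm (bigID (fun i : 'I_n => (i < k)%N)) /=.
  rewrite [X in _ + X]big1 ?addr0; last first.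
    move=> i; rewrite -leqNgt => hi; have hxi : x i <= x k by apply: hx.
    by case: (clip_cases al (x i)) => [[? ->]|[? ->]|[/andP[? ?] ->]]; lra.
  rewrite -cnt ?(ltnW (ltn_ord k)) //; apply: ler_sum => i _.
  by have /andP[? ?] := clip_b al (x i); lra.
move=> h.
by case: (clamp_cases (sgm al x - k%:R)) => [[? ->]|[? ->]|[/andP[? ?] ->]]; lra.
Qed.

Lemma xp_P al x : nonincreasing x -> forall k,
  xp al x k = x k \/ ((al <= x k <= al + 1) /\ (al <= xp al x k <= al + 1)).
Proof.
move=> hx k; rewrite /xp /ee.
case: (clip_cases al (x k)) => [[h ->]|[h ->]|[hb ->]].
- by left; rewrite ee_lo //; lra.
- by left; rewrite ee_hi //; lra.
- right; split => //.
  by case: (clamp_cases (sgm al x - k%:R)) => [[? ->]|[? ->]|[/andP[? ?] ->]];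
     apply/andP; split; lra.
Qed.

Lemma clip_lo al v : v < al -> clip al v = al.
Proof. by case: (clip_cases al v) => [[? ->]|[? ->]|[/andP[? ?] ->]] //; lra. Qed.
Lemma clip_hi al v : al + 1 < v -> clip al v = al + 1.
Proof. by case: (clip_cases al v) => [[? ->]|[? ->]|[/andP[? ?] ->]] //; lra. Qed.
Lemma clip_mid al v : al <= v <= al + 1 -> clip al v = v.
Proof. by move=> /andP[? ?]; case: (clip_cases al v) => [[? ->]|[? ->]|[/andP[? ?] ->]] //; lra. Qed.

Lemma xp_cl al x : nonincreasing x -> forall k, clip al (xp al x k) = ee al x k.
Proof.
move=> hx k; rewrite /xp /ee.
case: (clip_cases al (x k)) => [[h ->]|[h ->]|[hb ->]].
- by rewrite ee_lo // clip_lo; lra.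
- by rewrite ee_hi // clip_hi; lra.
- rewrite clip_mid; first lra.
  by case: (clamp_cases (sgm al x - k%:R)) => [[? ->]|[? ->]|[/andP[? ?] ->]];
     apply/andP; split; lra.
Qed.

Lemma xp_sum al x : nonincreasing x -> \sum_k xp al x k = \sum_k x k.
Proof.
move=> hx; rewrite /xp /ee.
have -> : \sum_k (x k - clip al (x k) + (al + clamp01 (sgm al x - (k:nat)%:R))) =
   \sum_k x k - sgm al x + \sum_(k < n) clamp01 (sgm al x - k%:R).
  rewrite (eq_bigr (fun k : 'I_n => (x k - (clip al (x k) - al)) + clamp01 (sgm al x - (k:nat)%:R))); last by move=> k _; lra.
  by rewrite big_split /= sumrB.
have /andP[h0 hn] := sgm_b al x.
by have [_ ->] := clamp_sum h0 n; [lra | ].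
Qed.

Lemma ee_hyp al x j : (j <= n)%N ->
  (j%:R <= sgm al x -> j%:R <= \sum_(k < n | (k < j)%N) (ee al x k - al)) /\
  (sgm al x <= j%:R -> sgm al x <= \sum_(k < n | (k < j)%N) (ee al x k - al)).
Proof.
move=> hj.
have -> : \sum_(k < n | (k < j)%N) (ee al x k - al) = \sum_(k < j) clamp01 (sgm al x - k%:R).
  rewrite (big_ord_widen n (fun k : nat => clamp01 (sgm al x - k%:R)) hj).
  by apply: eq_bigr => k _; rewrite /ee; lra.
have /andP[h0 _] := sgm_b al x.
have [h1 h2] := clamp_sum h0 j.
by split => h; [rewrite h1 | rewrite h2].
Qed.
End S.


Unset Implicit Arguments.

Theorem lemma6p15 (R : realType) (n : nat) (x y y' : 'I_n -> R) :
  nonincreasing x -> nonincreasing y -> majorizes x y ->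
  game_step y y' ->
  exists x' : 'I_n -> R, game_step x x' /\ majorizes x' y'.
Proof.
move=> hx hy hmaj [p [a [[hp1 hpn ha hsa] [S [hS hgr hy']]]]].
have hn : (0 < n)%N by apply: leq_trans hpn.
have [i0 hi0] : exists i0, i0 \in S.
  have : (0 < #|S|)%N by rewrite hS.
  by rewrite card_gt0 => /set0Pn.
pose z := fun i => y i + a i.
case: (@arg_minP _ R _ i0 (fun i => i \in S) z hi0) => i1 hi1 hmin.
pose al := z i1 - 1.
have hY : forall k, (al <= y' k <= y k) \/ (y k <= y' k <= al + 1).
  move=> k; rewrite hy'; have [ha0 ha1] := ha k.
  case hk: (k \in S).
    have h := hmin k hk; rewrite /z /= in h.
    by left; rewrite /= mulr1n; apply/andP; split; rewrite /al /z; lra.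
  have h := hgr i1 k hi1 (negbT hk); rewrite /= in h.
  by right; rewrite /= mulr0n; apply/andP; split; rewrite /al /z; lra.
have hb : \sum_i ((i \in S)%:R : R) = p%:R.
  rewrite -hS -sum1_card natr_sum [RHS]big_mkcond /=.
  by apply: eq_bigr => i _; case: (i \in S).
have sy : \sum_i y' i = \sum_i y i.
  rewrite (eq_bigr _ (fun i _ => hy' i)) /= sumrB big_split /= hsa hb; lra.
have sxy : \sum_i x i = \sum_i y i by case: hmaj.
exists (xp al x); split.
  apply: (reach hn (xp_P al hx)); exact: xp_sum.
apply: B2; first by rewrite xp_sum // sy sxy.
exact: (core hY (xp_P al hx) (xp_sum al hx) sy sxy (B1 hx hy hmaj) (xp_cl al hx) (erefl _) (@ee_hyp _ _ al x)).
Qed.
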